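(* There are constants $C,C'>0$ such that for every $\delta>0$, every $R>1$, every $(\delta^2,R^2)$-lattice $(x_j)_{j\in J}$ in $F$ and every $(\delta,R)$-lattice $(\zeta_{j'})_{j'\in J'}$ in $E$, the family $(\zeta_{j'},x_j)_{(j,j')\in J\times J'}$ is a $(C\delta,C'R)$-lattice on $\mathcal N$.
   Context: Let $E$ be a complex Hilbert space, $F$ a real Hilbert space (both with their Euclidean distances), and $\Phi\colon E\times E\to F_{\mathbb C}$ a hermitian map (complex-linear in the first variable, conjugate-linear in the second); $\Phi(\zeta)=\Phi(\zeta,\zeta)$. $\mathcal N=E\times F$ with group law $(\zeta,x)(\zeta',x')=(\zeta+\zeta',x+x'+2\operatorname{Im}\Phi(\zeta,\zeta'))$, endowed with a fixed left-invariant distance $d$ which is homogeneous of degree $1$ with respect to the dilations $t\cdot(\zeta,x)=(t\zeta,t^2x)$, $t>0$. In a metric space, a family $(a_k)$ is a $(\delta,R)$-lattice if the balls $B(a_k,\delta)$ are pairwise disjoint and the balls $B(a_k,R\delta)$ cover the space. *)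

(* Defs.v *)
From HB Require Import structures.
From mathcomp Require Import all_boot all_order all_algebra.
From mathcomp Require Import complex.
From mathcomp Require Import reals.
Set Implicit Arguments. Unset Strict Implicit. Unset Printing Implicit Defensive.
Import Order.TTheory GRing.Theory Num.Theory.
Local Open Scope ring_scope.
Local Open Scope complex_scope.

Definition Espace (R : realType) (n : nat) := 'rV[R[i]]_n.
Definition Fspace (R : realType) (m : nat) := 'rV[R]_m.
Definition FCspace (R : realType) (m : nat) := 'rV[R[i]]_m.

Definition distE (R : realType) (n : nat) (z w : Espace R n) : R :=
  Num.sqrt (\sum_(i < n) ((@complex.Re R ((z - w) 0 i)) ^+ 2 + (@complex.Im R ((z - w) 0 i)) ^+ 2)).
Definition distF (R : realType) (m : nat) (x y : Fspace R m) : R :=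
  Num.sqrt (\sum_(i < m) ((x - y) 0 i) ^+ 2).

Definition ImF (R : realType) (m : nat) (v : FCspace R m) : Fspace R m :=
  map_mx (@complex.Im R) v.

Definition hermitian_map (R : realType) (n m : nat)
  (Phi : Espace R n -> Espace R n -> FCspace R m) : Prop :=
  [/\ (forall (a : R[i]) z z' w, Phi (a *: z + z') w = a *: Phi z w + Phi z' w),
      (forall (a : R[i]) z w w', Phi z (a *: w + w') = a^* *: Phi z w + Phi z w')
    & (forall z w, Phi w z = map_mx (@conjc R) (Phi z w))].

Definition Ngroup (R : realType) (n m : nat) := (Espace R n * Fspace R m)%type.

Definition mulN (R : realType) (n m : nat)
  (Phi : Espace R n -> Espace R n -> FCspace R m) (p q : Ngroup R n m)
  : Ngroup R n m :=
  (p.1 + q.1, p.2 + q.2 + 2%:R *: ImF (Phi p.1 q.1)).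

Definition dilN (R : realType) (n m : nat) (t : R) (p : Ngroup R n m)
  : Ngroup R n m := (t%:C *: p.1, t ^+ 2 *: p.2).

Definition is_distance (T : Type) (R : realType) (d : T -> T -> R) : Prop :=
  [/\ (forall x y, d x y = 0 <-> x = y),
      (forall x y, d x y = d y x)
    & (forall x y z, d x z <= d x y + d y z)].

Definition left_invariant (R : realType) (n m : nat)
  (Phi : Espace R n -> Espace R n -> FCspace R m)
  (d : Ngroup R n m -> Ngroup R n m -> R) : Prop :=
  forall g p q, d (mulN Phi g p) (mulN Phi g q) = d p q.

Definition homogeneous1 (R : realType) (n m : nat)
  (d : Ngroup R n m -> Ngroup R n m -> R) : Prop :=
  forall t p q, 0 < t -> d (dilN t p) (dilN t q) = t * d p q.

Definition ball_of (T : Type) (R : realType) (d : T -> T -> R) (a : T) (r : R)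
  : T -> Prop := fun x => d a x < r.

Definition is_lattice (T K : Type) (R : realType) (d : T -> T -> R)
  (a : K -> T) (delta Rc : R) : Prop :=
  (forall k k', k <> k' -> forall x,
      ~ (ball_of d (a k) delta x /\ ball_of d (a k') delta x))
  /\ (forall x, exists k, ball_of d (a k) (Rc * delta) x).

(* Main.v *)
Require Import Defs.
From HB Require Import structures.
From mathcomp Require Import all_boot all_order all_algebra.
From mathcomp Require Import complex.
From mathcomp Require Import reals.
From mathcomp Require Import ring lra.
From mathcomp Require Import boolp classical_sets topology normedtype derive.
Import Order.TTheory GRing.Theory Num.Theory.
Import numFieldTopology.Exports numFieldNormedType.Exports.
Local Open Scope ring_scope.
Set Implicit Arguments. Unset Strict Implicit. Unset Printing Implicit Defensive.
Section Cplx.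
Variable R : realType.
Local Open Scope complex_scope.
Lemma ReD' (x y : R[i]) : complex.Re (x + y) = complex.Re x + complex.Re y.
Proof. by case: x => a b; case: y => c e. Qed.
Lemma ImD' (x y : R[i]) : complex.Im (x + y) = complex.Im x + complex.Im y.
Proof. by case: x => a b; case: y => c e. Qed.
Lemma ImRM (a : R) (x : R[i]) : complex.Im (a%:C * x) = a * complex.Im x.
Proof. by case: x => c e /=; rewrite mul0r addr0. Qed.
Lemma ReRM (a : R) (x : R[i]) : complex.Re (a%:C * x) = a * complex.Re x.
Proof. by case: x => c e /=; rewrite mul0r subr0. Qed.
Lemma ImJ (x : R[i]) : complex.Im (x^*) = - complex.Im x.
Proof. by case: x. Qed.
Lemma ReN' (x : R[i]) : complex.Re (- x) = - complex.Re x.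
Proof. by case: x. Qed.
Lemma ImN' (x : R[i]) : complex.Im (- x) = - complex.Im x.
Proof. by case: x. Qed.
Lemma Re0 : complex.Re (0 : R[i]) = 0. Proof. by []. Qed.
Lemma Im0 : complex.Im (0 : R[i]) = 0. Proof. by []. Qed.
End Cplx.
Section Coord.
Variables (R : realType) (n : nat).
Definition re (z : Espace R n) i := complex.Re (z 0 i).
Definition im (z : Espace R n) i := complex.Im (z 0 i).
Definition ed (i : 'I_n) : Espace R n := \row_k (if k == i then 1 else 0).
Definition fd (i : 'I_n) : Espace R n := \row_k (if k == i then 'i%C else 0).
Definition cubeE (z : Espace R n) (r : R) := forall i, `|re z i| <= r /\ `|im z i| <= r.

Lemma decompE (z : Espace R n) :
  z = \sum_i (((re z i)%:C)%C *: ed i + ((im z i)%:C)%C *: fd i).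
Proof.
apply/rowP => k; rewrite summxE (bigD1 k) //= big1 ?addr0; last first.
  by move=> i /negbTE ik; rewrite !mxE eq_sym ik !mulr0 addr0.
rewrite !mxE eqxx /re /im; case: (z 0 k) => a b /=.
by apply/eqP; rewrite eq_complex /=; apply/andP; split; apply/eqP; lra.
Qed.

Definition KL (L : Espace R n -> R) := \sum_i (`|L (ed i)| + `|L (fd i)|).

Lemma KL_ge0 L : 0 <= KL L.
Proof. by apply: sumr_ge0 => i _; rewrite addr_ge0. Qed.

Lemma lin_bound (L : Espace R n -> R) :
  (forall z z', L (z + z') = L z + L z') ->
  (forall (a : R) z, L (((a%:C)%C) *: z) = a * L z) ->
  forall z r, cubeE z r -> `|L z| <= r * KL L.
Proof.
move=> hadd hsc z r hz.
have L0 : L 0 = 0.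
  by move: (hadd 0 0); rewrite addr0 => /(congr1 (fun x => x - L 0)); rewrite subrr addrK.
rewrite {1}(decompE z) (big_morph L hadd L0) /KL mulr_sumr.
apply: le_trans (ler_norm_sum _ _ _) _; apply: ler_sum => i _.
rewrite hadd !hsc mulrDr; apply: le_trans (ler_normD _ _) _.
have [h1 h2] := hz i.
by rewrite !normrM lerD // ler_wpM2r.
Qed.
End Coord.
Section Analysis.

Local Open Scope classical_set_scope.
Lemma lower_pos (R : realType) (k : nat) (f : 'rV[R]_k -> R) (eps : R) :
  continuous f -> (forall v, eps <= `|v| -> `|v| <= 1 -> 0 < f v) ->
  exists c, 0 < c /\ forall v, eps <= `|v| -> `|v| <= 1 -> c <= f v.
Proof.
move=> cf fpos.
pose A := [set v : 'rV[R]_k | eps <= `|v| <= 1].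
have [/eqP A0|An0] := boolP (A == set0).
  exists 1; split => // v h1 h2; exfalso.
  have : A v by rewrite /A /= h1 h2.
  by rewrite A0.
have cA : compact A.
  apply: bounded_closed_compact.
    exists 1; split; first exact: num_real.
    by move=> M M1 v /andP[_ v1] /=; apply: le_trans v1 (ltW M1).
  have -> : A = Num.norm @^-1` `[eps, 1].
    by rewrite /A; apply/seteqP; split => v /=; rewrite in_itv.
  apply: (continuous_closedP _).1; first exact: norm_continuous.
  exact: itv_closed.
have [c0 c0A hmin] := EVT_min_rV ((set0P A).1 An0) cA (continuous_subspaceT cf).
move: c0A; rewrite inE => /andP[h1 h2].
exists (f c0); split; first exact: fpos.
by move=> v v1 v2; apply: hmin; rewrite inE /A /= v1 v2.
Qed.

Lemma cont_eps (R : realType) (k : nat) (f : 'rV[R]_k -> R) :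
  (forall v e, 0 < e -> exists2 dl, 0 < dl & forall w, `|v - w| < dl -> `|f v - f w| < e) ->
  continuous f.
Proof.
move=> h v A /= /nbhs_ballP [e e0 hA]; apply/nbhs_ballP.
have [dl dl0 hdl] := h v e e0; exists dl => // w /= hw; apply: hA.
rewrite -ball_normE /ball_ /=; apply: hdl.
by move: hw; rewrite -ball_normE.
Qed.

Lemma coord_le_norm (R : realType) (k : nat) (v : 'rV[R]_k) c : `|v 0 c| <= `|v|.
Proof.
rewrite [leRHS]/Num.Def.normr /= mx_normrE.
exact: (le_bigmax 0 (fun ij : 'I_1 * 'I_k => `|v ij.1 ij.2|) (ord0, c)).
Qed.

Lemma norm_le_coord (R : realType) (k : nat) (v : 'rV[R]_k) r : 0 <= r -> (forall c, `|v 0 c| <= r) -> `|v| <= r.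
Proof.
move=> r0 h; rewrite [leLHS]/Num.Def.normr /= mx_normrE.
apply/bigmax_leP; split => // -[i c] _ /=; rewrite (ord1 i); exact: h.
Qed.

End Analysis.

Section Grp.
Variables (R : realType) (n m : nat)
  (Phi : Espace R n -> Espace R n -> FCspace R m)
  (d : Ngroup R n m -> Ngroup R n m -> R).
Hypotheses (hPhi : hermitian_map Phi) (hd : is_distance d)
  (hli : left_invariant Phi d) (hh : homogeneous1 d).

Definition e0 : Ngroup R n m := (0, 0).
Definition NN p := d e0 p.
Definition invN (p : Ngroup R n m) : Ngroup R n m := (- p.1, - p.2).
Definition Psi z w := ImF (Phi z w).

Lemma Phi_addl z z' w : Phi (z + z') w = Phi z w + Phi z' w.
Proof. by case: hPhi => h _ _; have := h 1 z z' w; rewrite !scale1r. Qed.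
Lemma Phi_addr z w w' : Phi z (w + w') = Phi z w + Phi z w'.
Proof. by case: hPhi => _ h _; have := h 1 z w w'; rewrite conjC1 !scale1r. Qed.
Lemma Phi_0l w : Phi 0 w = 0.
Proof.
by move: (Phi_addl 0 0 w); rewrite addr0 => /(congr1 (fun x => x - Phi 0 w)); rewrite subrr addrK.
Qed.
Lemma Phi_0r z : Phi z 0 = 0.
Proof.
by move: (Phi_addr z 0 0); rewrite addr0 => /(congr1 (fun x => x - Phi z 0)); rewrite subrr addrK.
Qed.
Lemma Phi_Nl z w : Phi (- z) w = - Phi z w.
Proof. by apply/eqP; rewrite -addr_eq0 -Phi_addl addNr Phi_0l. Qed.
Lemma Phi_Nr z w : Phi z (- w) = - Phi z w.
Proof. by apply/eqP; rewrite -addr_eq0 -Phi_addr addNr Phi_0r. Qed.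
Lemma Phi_Rl (a : R) z w : Phi ((a%:C)%C *: z) w = (a%:C)%C *: Phi z w.
Proof. by case: hPhi => h _ _; rewrite -[_ *: z]addr0 h Phi_0l addr0. Qed.
Lemma conjR (a : R) : Num.conj ((a%:C)%C : R[i]) = (a%:C)%C.
Proof. by apply/conj_Creal; rewrite complex_real. Qed.
Lemma Phi_Rr (a : R) z w : Phi z ((a%:C)%C *: w) = (a%:C)%C *: Phi z w.
Proof. by case: hPhi => _ h _; rewrite -[_ *: w]addr0 h Phi_0r addr0 conjR. Qed.

Lemma ImF_add u v : ImF (u + v) = ImF u + ImF v :> Fspace R m.
Proof. by apply/rowP => j; rewrite !mxE ImD'. Qed.
Lemma ImF_0 : ImF 0 = 0 :> Fspace R m.
Proof. by apply/rowP => j; rewrite !mxE. Qed.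
Lemma ImF_N u : ImF (- u) = - ImF u :> Fspace R m.
Proof. by apply/eqP; rewrite -addr_eq0 -ImF_add addNr ImF_0. Qed.
Lemma ImF_R (a : R) u : ImF ((a%:C)%C *: u) = a *: ImF u :> Fspace R m.
Proof. by apply/rowP => j; rewrite !mxE ImRM. Qed.

Lemma Psi_addl z z' w : Psi (z + z') w = Psi z w + Psi z' w.
Proof. by rewrite /Psi Phi_addl ImF_add. Qed.
Lemma Psi_addr z w w' : Psi z (w + w') = Psi z w + Psi z w'.
Proof. by rewrite /Psi Phi_addr ImF_add. Qed.
Lemma Psi_0l w : Psi 0 w = 0. Proof. by rewrite /Psi Phi_0l ImF_0. Qed.
Lemma Psi_0r z : Psi z 0 = 0. Proof. by rewrite /Psi Phi_0r ImF_0. Qed.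
Lemma Psi_Nl z w : Psi (- z) w = - Psi z w. Proof. by rewrite /Psi Phi_Nl ImF_N. Qed.
Lemma Psi_Nr z w : Psi z (- w) = - Psi z w. Proof. by rewrite /Psi Phi_Nr ImF_N. Qed.
Lemma Psi_Rl (a : R) z w : Psi ((a%:C)%C *: z) w = a *: Psi z w.
Proof. by rewrite /Psi Phi_Rl ImF_R. Qed.
Lemma Psi_Rr (a : R) z w : Psi z ((a%:C)%C *: w) = a *: Psi z w.
Proof. by rewrite /Psi Phi_Rr ImF_R. Qed.
Lemma Psi_diag z : Psi z z = 0.
Proof.
case: hPhi => _ _ h; apply/rowP => j; rewrite !mxE.
have := congr1 (fun M : FCspace R m => complex.Im (M 0 j)) (h z z); rewrite /= mxE ImJ.
by move=> e; apply/eqP; rewrite -[_ == 0](@mulrn_eq0 _ _ 2) mulr2n {2}e subrr.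
Qed.

Lemma mul0N p : mulN Phi e0 p = p.
Proof. by case: p => z x; rewrite /mulN /= Phi_0l ImF_0 scaler0 !add0r addr0. Qed.
Lemma mulN0 p : mulN Phi p e0 = p.
Proof. by case: p => z x; rewrite /mulN /= Phi_0r ImF_0 scaler0 !addr0. Qed.
Lemma mulNV p : mulN Phi p (invN p) = e0.
Proof.
by case: p => z x; rewrite /mulN /invN /= Phi_Nr ImF_N -/(Psi z z) Psi_diag oppr0 scaler0 !subrr addr0.
Qed.
Lemma mulVN p : mulN Phi (invN p) p = e0.
Proof.
by case: p => z x; rewrite /mulN /invN /= Phi_Nl ImF_N -/(Psi z z) Psi_diag oppr0 scaler0 !addNr addr0.
Qed.

Lemma d_self x : d x x = 0. Proof. by case: hd => h _ _; apply/h. Qed.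
Lemma d_sym x y : d x y = d y x. Proof. by case: hd. Qed.
Lemma d_tri x y z : d x z <= d x y + d y z. Proof. by case: hd. Qed.
Lemma d_ge0 x y : 0 <= d x y.
Proof.
have := d_tri x y x; rewrite d_self (d_sym y x); lra.
Qed.
Lemma d_eq0 x y : d x y = 0 -> x = y. Proof. by case: hd => h _ _ /h. Qed.

Lemma NN_ge0 p : 0 <= NN p. Proof. exact: d_ge0. Qed.
Lemma NN0 : NN e0 = 0. Proof. exact: d_self. Qed.
Lemma NN_inv p : NN (invN p) = NN p.
Proof. by rewrite /NN -(hli p) mulN0 mulNV d_sym. Qed.
Lemma d_NN p q : d p q = NN (mulN Phi (invN p) q).
Proof. by rewrite /NN -(hli (invN p) p q) mulVN. Qed.
Lemma NN_mul p q : NN (mulN Phi p q) <= NN p + NN q.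
Proof.
rewrite /NN; apply: le_trans (d_tri _ p _) _; rewrite lerD2l.
by rewrite -{1}(mulN0 p) hli.
Qed.
Lemma NN_dil t p : 0 < t -> NN (dilN t p) = t * NN p.
Proof.
move=> t0; rewrite /NN -hh //; congr d.
by rewrite /dilN /e0 /= !scaler0.
Qed.
Lemma NN_eq0 p : NN p = 0 -> p = e0.
Proof. by move/d_eq0. Qed.



Lemma Psi_entry_add z z' w j : Psi (z + z') w 0 j = Psi z w 0 j + Psi z' w 0 j.
Proof. by rewrite Psi_addl mxE. Qed.
Lemma Psi_entry_R a z w j : Psi (((a%:C)%C) *: z) w 0 j = a * Psi z w 0 j.
Proof. by rewrite Psi_Rl mxE. Qed.
Lemma Psi_entry_addr z w w' j : Psi z (w + w') 0 j = Psi z w 0 j + Psi z w' 0 j.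
Proof. by rewrite Psi_addr mxE. Qed.
Lemma Psi_entry_Rr a z w j : Psi z (((a%:C)%C) *: w) 0 j = a * Psi z w 0 j.
Proof. by rewrite Psi_Rr mxE. Qed.

Lemma Psi_bound : exists K, 0 <= K /\ forall z w r s j, 0 <= r -> 0 <= s ->
  cubeE z r -> cubeE w s -> `|Psi z w 0 j| <= K * (r * s).
Proof.
pose Kj (j : 'I_m) := \sum_i (KL (fun w => Psi (@ed R n i) w 0 j) + KL (fun w => Psi (@fd R n i) w 0 j)).
have Kj0 j : 0 <= Kj j by apply: sumr_ge0 => i _; rewrite addr_ge0 // KL_ge0.
exists (\sum_j Kj j); split; first by apply: sumr_ge0.
move=> z w r s j r0 s0 hz hw.
have h1 := lin_bound (L := fun z => Psi z w 0 j) (fun z z' => Psi_entry_add z z' w j) (fun a z => Psi_entry_R a z w j) hz.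
apply: le_trans h1 _.
have h2 : KL (fun z => Psi z w 0 j) <= s * Kj j.
  rewrite /KL /Kj mulr_sumr; apply: ler_sum => i _; rewrite mulrDr; apply: lerD.
    exact: (lin_bound (L := fun w => Psi (@ed R n i) w 0 j) (fun w w' => Psi_entry_addr _ w w' j) (fun a w => Psi_entry_Rr a _ w j) hw).
  exact: (lin_bound (L := fun w => Psi (@fd R n i) w 0 j) (fun w w' => Psi_entry_addr _ w w' j) (fun a w => Psi_entry_Rr a _ w j) hw).
have h3 : Kj j <= \sum_j Kj j by rewrite (bigD1 j) //= lerDl sumr_ge0.
apply: le_trans (ler_wpM2l r0 h2) _.
by rewrite [X in _ <= X]mulrC mulrA; apply: ler_wpM2l => //; rewrite mulr_ge0.
Qed.

Definition cubeF (x : Fspace R m) (r : R) := forall j, `|x 0 j| <= r.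
Definition eF (j : 'I_m) : Fspace R m := \row_k (if k == j then 1 else 0).

Lemma decompF (x : Fspace R m) : x = \sum_j x 0 j *: eF j.
Proof.
apply/rowP => k; rewrite summxE (bigD1 k) //= big1 ?addr0; last first.
  by move=> i /negbTE ik; rewrite !mxE eq_sym ik mulr0.
by rewrite !mxE eqxx mulr1.
Qed.

Lemma N_vadd a b : NN (0, a + b) <= NN (0, a) + NN (0, b).
Proof.
have -> : ((0, a + b) : Ngroup R n m) = mulN Phi (0, a) (0, b).
  by rewrite /mulN /= Phi_0l ImF_0 scaler0 !addr0.
exact: NN_mul.
Qed.

Lemma N_vsum (I : Type) (r : seq I) (P : pred I) (F : I -> Fspace R m) :
  NN (0, \sum_(i <- r | P i) F i) <= \sum_(i <- r | P i) NN (0, F i).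
Proof.
apply: (big_rec2 (fun y1 y2 => NN (0, y1) <= y2)); first by rewrite NN0.
move=> i y1 y2 _ h; apply: le_trans (N_vadd _ _) _; exact: lerD.
Qed.

Lemma N_vscale_pos a e : 0 < a -> a <= 1 -> NN (0, a *: e) <= NN (0, e).
Proof.
move=> a0 a1.
have -> : ((0, a *: e) : Ngroup R n m) = dilN (Num.sqrt a) (0, e).
  by rewrite /dilN /= scaler0 sqr_sqrtr // ltW.
rewrite NN_dil ?sqrtr_gt0 //; apply: ler_piMl; first exact: NN_ge0.
by rewrite -sqrtr1 ler_sqrt.
Qed.

Lemma N_vscale a e : `|a| <= 1 -> NN (0, a *: e) <= NN (0, e).
Proof.
move=> a1; have [a0|a0|->] := ltgtP a 0; last by rewrite scale0r NN0 NN_ge0.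
  have -> : ((0, a *: e) : Ngroup R n m) = invN (0, (- a) *: e).
    by rewrite /invN /= oppr0 scaleNr opprK.
  rewrite NN_inv; apply: N_vscale_pos; first by rewrite oppr_gt0.
  by rewrite -(ltr0_norm a0).
by apply: N_vscale_pos => //; rewrite gtr0_norm in a1.
Qed.

Lemma V1 : exists KV, 0 <= KV /\ forall x, cubeF x 1 -> NN (0, x) <= KV.
Proof.
exists (\sum_j NN (0, eF j)); split; first by apply: sumr_ge0 => j _; exact: NN_ge0.
move=> x hx; rewrite {1}(decompF x); apply: le_trans (N_vsum _ _ _) _.
by apply: ler_sum => j _; apply: N_vscale.
Qed.

Lemma Vs : exists KV, 0 <= KV /\ forall s x, 0 < s -> cubeF x (s ^+ 2) -> NN (0, x) <= s * KV.
Proof.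
have [KV [KV0 hV]] := V1; exists KV; split => // s x s0 hx.
have s20 : 0 < s ^+ 2 by rewrite exprn_gt0.
have -> : ((0, x) : Ngroup R n m) = dilN s (0, (s ^+ 2)^-1 *: x).
  by rewrite /dilN /= scaler0 scalerA divff ?scale1r // gt_eqF.
rewrite NN_dil // ler_pM2l //; apply: hV => j.
by rewrite mxE normrM gtr0_norm ?invr_gt0 // ler_pdivrMl // mulr1.
Qed.

Lemma N_hadd z w : NN (z + w, 0) <= NN (z, 0) + NN (w, 0) + NN (0, - (2%:R *: Psi z w)).
Proof.
have -> : ((z + w, 0) : Ngroup R n m) =
   mulN Phi (mulN Phi (z, 0) (w, 0)) (0, - (2%:R *: Psi z w)).
  by rewrite /mulN /= Phi_0r ImF_0 scaler0 !addr0 add0r -/(Psi z w) subrr.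
apply: le_trans (NN_mul _ _) _; rewrite lerD2r; exact: NN_mul.
Qed.

Lemma N_hscale_pos a e : 0 < a -> a <= 1 -> NN (((a%:C)%C) *: e, 0) <= NN (e, 0).
Proof.
move=> a0 a1.
have -> : ((((a%:C)%C) *: e, 0) : Ngroup R n m) = dilN a (e, 0).
  by rewrite /dilN /= scaler0.
by rewrite NN_dil //; apply: ler_piMl => //; exact: NN_ge0.
Qed.

Lemma N_hscale a e : `|a| <= 1 -> NN (((a%:C)%C) *: e, 0) <= NN (e, 0).
Proof.
move=> a1; have [a0|a0|->] := ltgtP a 0; last by rewrite scale0r NN0 NN_ge0.
  have -> : ((((a%:C)%C) *: e, 0) : Ngroup R n m) = invN (((- a)%:C)%C *: e, 0).
    by rewrite /invN /= oppr0 rmorphN scaleNr opprK.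
  rewrite NN_inv; apply: N_hscale_pos; first by rewrite oppr_gt0.
  by rewrite -(ltr0_norm a0).
by apply: N_hscale_pos => //; rewrite gtr0_norm in a1.
Qed.

Lemma reD (z w : Espace R n) l : re (z + w) l = re z l + re w l.
Proof. by rewrite /re mxE ReD'. Qed.
Lemma imD (z w : Espace R n) l : im (z + w) l = im z l + im w l.
Proof. by rewrite /im mxE ImD'. Qed.
Lemma reR a (z : Espace R n) l : re (((a%:C)%C) *: z) l = a * re z l.
Proof. by rewrite /re mxE ReRM. Qed.
Lemma imR a (z : Espace R n) l : im (((a%:C)%C) *: z) l = a * im z l.
Proof. by rewrite /im mxE ImRM. Qed.
Lemma re_ed o l : re (@ed R n o) l = (l == o)%:R.
Proof. by rewrite /re mxE; case: (l == o). Qed.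
Lemma im_ed o l : im (@ed R n o) l = 0.
Proof. by rewrite /im mxE; case: (l == o). Qed.
Lemma re_fd o l : re (@fd R n o) l = 0.
Proof. by rewrite /re mxE; case: (l == o). Qed.
Lemma im_fd o l : im (@fd R n o) l = (l == o)%:R.
Proof. by rewrite /im mxE; case: (l == o). Qed.

Definition Sk (k : nat) (z : Espace R n) : Espace R n := \row_l (if (l < k)%N then z 0 l else 0).

Lemma cube_Sk k z : cubeE z 1 -> cubeE (Sk k z) 1.
Proof.
move=> hz l; rewrite /re /im mxE; case: (l < k)%N; first exact: hz.
by rewrite normr0 ler01.
Qed.

Lemma H_step (KS : R) k : (forall z, cubeE z 1 -> NN (Sk k z, 0) <= KS) ->
  exists K, forall z, cubeE z 1 -> NN (Sk k.+1 z, 0) <= K.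
Proof.
move=> hS; case: (ltnP k n) => kn; last first.
  exists KS => z hz; have -> : Sk k.+1 z = Sk k z; last exact: hS.
  apply/rowP => l; rewrite !mxE.
  by rewrite (leq_trans (ltn_ord l) kn) (leq_trans (ltn_ord l) (leqW kn)).
pose o := Ordinal kn.
have [Kb [Kb0 hb]] := Psi_bound.
have [KV [KV0 hV]] := Vs.
pose s := 1 + 2%:R * Kb.
have s0 : 0 < s by rewrite /s; lra.
have hV2 z w : cubeE z 1 -> cubeE w 1 -> NN (0, - (2%:R *: Psi z w)) <= s * KV.
  move=> hz hw; apply: hV => // j; rewrite mxE mxE normrN normrM.
  have := hb z w 1 1 j ler01 ler01 hz hw; rewrite mulr1.
  rewrite ger0_norm ?ler0n // /s; nra.
exists (KS + (NN (@ed R n o, 0) + NN (@fd R n o, 0) + s * KV) + s * KV) => z hz.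
have e1 : Sk k.+1 z = Sk k z + (((re z o)%:C)%C *: @ed R n o + ((im z o)%:C)%C *: @fd R n o).
  apply/rowP => l; rewrite !mxE ltnS leq_eqVlt.
  have [lo|lo] := eqVneq l o.
    rewrite lo eqxx /= ltnn /re /im !mulr1 add0r; case: (z 0 o) => a b /=.
    by apply/eqP; rewrite eq_complex /=; apply/andP; split; apply/eqP; lra.
  have lk : (nat_of_ord l == k) = false by apply/negbTE; apply: contra lo => /eqP h; apply/eqP/val_inj.
  by rewrite lk /= !mulr0 !addr0.
have cw1 : cubeE (((re z o)%:C)%C *: @ed R n o) 1.
  move=> l; rewrite reR imR re_ed im_ed mulr0 normr0 ler01 normrM; split => //.
  have [h _] := hz o; apply: le_trans (ler_wpM2l (normr_ge0 _) (_ : `|(l == o)%:R| <= 1)) _.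
    by case: (l == o); rewrite ?normr0 ?normr1.
  by rewrite mulr1.
have cw2 : cubeE (((im z o)%:C)%C *: @fd R n o) 1.
  move=> l; rewrite reR imR re_fd im_fd mulr0 normr0 ler01 normrM; split => //.
  have [_ h] := hz o; apply: le_trans (ler_wpM2l (normr_ge0 _) (_ : `|(l == o)%:R| <= 1)) _.
    by case: (l == o); rewrite ?normr0 ?normr1.
  by rewrite mulr1.
have cw : cubeE (((re z o)%:C)%C *: @ed R n o + ((im z o)%:C)%C *: @fd R n o) 1.
  move=> l; rewrite reD imD !reR !imR re_ed im_ed re_fd im_fd !mulr0 addr0 add0r !normrM.
  have [h1 h2] := hz o.
  by split; (apply: le_trans (ler_wpM2l (normr_ge0 _) (_ : `|(l == o)%:R| <= 1)) _;
    [by case: (l == o); rewrite ?normr0 ?normr1 | by rewrite mulr1]).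
rewrite e1; apply: le_trans (N_hadd _ _) _.
apply: lerD; last exact: hV2 (cube_Sk _ hz) cw.
apply: lerD; first exact: hS.
apply: le_trans (N_hadd _ _) _.
apply: lerD; last exact: hV2 cw1 cw2.
have [h1 h2] := hz o.
by apply: lerD; apply: N_hscale.
Qed.

Lemma H1 : exists KH, 0 <= KH /\ forall z, cubeE z 1 -> NN (z, 0) <= KH.
Proof.
have : forall k, exists K, forall z, cubeE z 1 -> NN (Sk k z, 0) <= K.
  elim=> [|k [K hK]]; last exact: H_step hK.
  exists 0 => z _; have -> : Sk 0 z = 0 by apply/rowP => l; rewrite !mxE.
  by rewrite NN0.
move=> /(_ n) [K hK].
have hz z : Sk n z = z by apply/rowP => l; rewrite !mxE ltn_ord.
exists K; split.
  apply: le_trans (NN_ge0 (Sk n 0, 0)) (hK 0 _) => l.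
  by rewrite /re /im mxE normr0 ler01.
by move=> z cz; rewrite -[X in (X, _)]hz; apply: hK.
Qed.

Lemma N_split z x : NN (z, x) <= NN (z, 0) + NN (0, x).
Proof.
have -> : ((z, x) : Ngroup R n m) = mulN Phi (z, 0) (0, x).
  by rewrite /mulN /= Phi_0r ImF_0 scaler0 !addr0 add0r.
exact: NN_mul.
Qed.

Lemma Ubound : exists KU, 0 <= KU /\ forall r z x, 0 < r -> cubeE z r ->
  cubeF x (r ^+ 2) -> NN (z, x) <= r * KU.
Proof.
have [KH [KH0 hH]] := H1; have [KV [KV0 hV]] := V1.
exists (KH + KV); split; first by rewrite addr_ge0.
move=> r z x r0 hz hx.
have r20 : 0 < r ^+ 2 by rewrite exprn_gt0.
have -> : ((z, x) : Ngroup R n m) = dilN r ((((r^-1)%:C)%C) *: z, (r ^+ 2)^-1 *: x).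
  rewrite /dilN /= !scalerA divff ?scale1r ?gt_eqF //.
  by rewrite -rmorphM divff ?gt_eqF // rmorph1 scale1r.
rewrite NN_dil // ler_pM2l //; apply: le_trans (N_split _ _) _; apply: lerD.
  apply: hH => l; rewrite reR imR !normrM gtr0_norm ?invr_gt0 //.
  by have [h1 h2] := hz l; rewrite !ler_pdivrMl // mulr1.
apply: hV => j; rewrite mxE normrM gtr0_norm ?invr_gt0 //.
by rewrite ler_pdivrMl // mulr1.
Qed.

Definition dec (v : 'rV[R]_(n + n + m)) : Ngroup R n m :=
  (\row_i ((v 0 (lshift m (lshift n i)) +i* v 0 (lshift m (rshift n i)))%C),
   \row_j v 0 (rshift (n + n) j)).
Definition enc (p : Ngroup R n m) : 'rV[R]_(n + n + m) :=
  row_mx (row_mx (\row_i re p.1 i) (\row_i im p.1 i)) p.2.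

Lemma re_dec v i : re (dec v).1 i = v 0 (lshift m (lshift n i)).
Proof. by rewrite /re mxE. Qed.
Lemma im_dec v i : im (dec v).1 i = v 0 (lshift m (rshift n i)).
Proof. by rewrite /im mxE. Qed.
Lemma dec2 v j : (dec v).2 0 j = v 0 (rshift (n + n) j).
Proof. by rewrite mxE. Qed.
Lemma enc_ll p i : enc p 0 (lshift m (lshift n i)) = re p.1 i.
Proof. by rewrite /enc row_mxEl row_mxEl mxE. Qed.
Lemma enc_lr p i : enc p 0 (lshift m (rshift n i)) = im p.1 i.
Proof. by rewrite /enc row_mxEl row_mxEr mxE. Qed.
Lemma enc_r p j : enc p 0 (rshift (n + n) j) = p.2 0 j.
Proof. by rewrite /enc row_mxEr. Qed.

Lemma split3 (P : 'I_(n + n + m) -> Prop) :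
  (forall i, P (lshift m (lshift n i))) -> (forall i, P (lshift m (rshift n i))) ->
  (forall j, P (rshift (n + n) j)) -> forall c, P c.
Proof.
move=> h1 h2 h3 c; case: (splitP c) => [c1 e|j e].
  have -> : c = lshift m c1 by apply/val_inj.
  case: (splitP c1) => [i e'|i e'].
    by have -> : c1 = lshift n i by apply/val_inj.
  by have -> : c1 = rshift n i by apply/val_inj.
by have -> : c = rshift (n + n) j by apply/val_inj.
Qed.

Lemma dec_enc p : dec (enc p) = p.
Proof.
case: p => z x; rewrite /dec; congr pair; apply/rowP => i; rewrite mxE ?enc_r //.
rewrite enc_ll enc_lr /re /im /=; by case: (z 0 i).
Qed.

Lemma dec_eq0 v : dec v = e0 -> v = 0.
Proof.
move=> h; apply/rowP => c; rewrite mxE; move: c; apply: split3 => i.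
- by rewrite -re_dec h /re mxE.
- by rewrite -im_dec h /im mxE.
- by rewrite -dec2 h mxE.
Qed.

Lemma re_sub (z w : Espace R n) l : re (z - w) l = re z l - re w l.
Proof. by rewrite /re !mxE ReD' ReN'. Qed.
Lemma im_sub (z w : Espace R n) l : im (z - w) l = im z l - im w l.
Proof. by rewrite /im !mxE ImD' ImN'. Qed.

Lemma mulinv P Q : mulN Phi (invN P) Q = (Q.1 - P.1, Q.2 - P.2 - 2%:R *: Psi P.1 Q.1).
Proof.
rewrite /mulN /invN /= Phi_Nl ImF_N scalerN -/(Psi _ _).
by congr pair; [rewrite addrC | congr (_ - _); rewrite addrC].
Qed.

Lemma Psi_shift z w : Psi z w = Psi z (w - z).
Proof. by rewrite Psi_addr Psi_Nr Psi_diag oppr0 addr0. Qed.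

Lemma coord_diff (v w : 'rV[R]_(n + n + m)) c : `|w 0 c - v 0 c| <= `|v - w|.
Proof.
rewrite [leLHS]distrC; have -> : v 0 c - w 0 c = (v - w) 0 c by rewrite !mxE.
exact: coord_le_norm.
Qed.

Lemma f_cont : continuous (fun v => NN (dec v)).
Proof.
apply: cont_eps => v e e0.
have [KU [KU0 hU]] := Ubound; have [Kb [Kb0 hb]] := Psi_bound.
pose r := e / (2%:R * (KU + 1)).
have r0 : 0 < r by rewrite /r divr_gt0 // mulr_gt0 //; lra.
have rKU : r * KU < e.
  rewrite /r mulrAC ltr_pdivrMr ?mulr_gt0 //; try lra; nra.
pose M := `|v|.
have M0 : 0 <= M by exact: normr_ge0.
pose eta := Num.min r (r ^+ 2 / (1 + 2%:R * Kb * M)).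
have D0 : 0 < 1 + 2%:R * Kb * M by nra.
have eta0 : 0 < eta by rewrite lt_min r0 divr_gt0 // exprn_gt0.
have eta1 : eta <= r by rewrite ge_min lexx.
have eta2 : eta * (1 + 2%:R * Kb * M) <= r ^+ 2.
  by rewrite -ler_pdivlMr // ge_min lexx orbT.
exists eta => // w hw.
have hdd : `|NN (dec v) - NN (dec w)| <= d (dec v) (dec w).
  rewrite ler_norml; apply/andP; split.
    rewrite lerBrDl lerBlDr /NN; apply: le_trans (d_tri _ (dec v) _) _; lra.
  rewrite lerBlDr /NN; apply: le_trans (d_tri _ (dec w) _) _; rewrite (d_sym (dec w) (dec v)); lra.
apply: le_lt_trans hdd _; rewrite d_NN mulinv Psi_shift.
set D := (dec w).1 - (dec v).1.
have cD : cubeE D eta.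
  move=> i; rewrite /D re_sub im_sub !re_dec !im_dec.
  by split; apply: ltW; apply: le_lt_trans hw; apply: coord_diff.
have cv : cubeE (dec v).1 M.
  by move=> i; rewrite re_dec im_dec; split; apply: coord_le_norm.
apply: le_lt_trans rKU; apply: hU => //.
  by move=> i; have [h1 h2] := cD i; split; apply: le_trans eta1.
move=> j; rewrite !mxE.
have h1 : `|(dec w).2 0 j - (dec v).2 0 j| <= eta.
  by rewrite !dec2; apply: ltW; apply: le_lt_trans hw; apply: coord_diff.
have h2 := hb _ _ _ _ j M0 (ltW eta0) cv cD.
rewrite !dec2 in h1; rewrite /Psi /ImF mxE in h2.
apply: le_trans (ler_normD _ _) _; rewrite normrN normrM ger0_norm ?ler0n //.
apply: le_trans eta2; nra.
Qed.

Definition aE (z : Espace R n) := \sum_i (`|re z i| + `|im z i|).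
Definition bF (x : Fspace R m) : R := \sum_j `|x 0 j|.

Lemma aE_ge0 z : 0 <= aE z.
Proof. by apply: sumr_ge0 => i _; rewrite addr_ge0. Qed.
Lemma bF_ge0 (x : Fspace R m) : 0 <= bF x.
Proof. by apply: sumr_ge0. Qed.
Lemma term_aE z i : `|re z i| + `|im z i| <= aE z.
Proof. by rewrite /aE (bigD1 i) //= lerDl sumr_ge0 // => l _; rewrite addr_ge0. Qed.
Lemma re_le_aE z i : `|re z i| <= aE z.
Proof. by apply: le_trans (term_aE z i); rewrite lerDl. Qed.
Lemma im_le_aE z i : `|im z i| <= aE z.
Proof. by apply: le_trans (term_aE z i); rewrite lerDr. Qed.
Lemma term_bF (x : Fspace R m) j : `|x 0 j| <= bF x.
Proof. by rewrite /bF (bigD1 j) //= lerDl sumr_ge0. Qed.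

Lemma dil_comp (s u : R) (p : Ngroup R n m) : dilN s (dilN u p) = dilN (s * u) p.
Proof. by rewrite /dilN /= !scalerA rmorphM exprMn. Qed.
Lemma dil1 (p : Ngroup R n m) : dilN 1 p = p.
Proof. by case: p => z x; rewrite /dilN /= rmorph1 expr1n !scale1r. Qed.

Lemma LBcore : exists c, 0 < c /\ forall p t, 0 < t ->
  (t <= aE p.1 \/ t ^+ 2 <= bF p.2) -> c * t <= NN p.
Proof.
pose nN : R := n%:R; pose mN : R := m%:R.
have nN0 : 0 <= nN by rewrite ler0n.
have mN0 : 0 <= mN by rewrite ler0n.
pose N := nN + nN + mN + 1.
have N0 : 0 < N by rewrite /N; lra.
pose eps := (8%:R * N)^-1.
have eps0 : 0 < eps by rewrite invr_gt0; lra.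
have epsN : eps * (8%:R * N) = 1 by rewrite mulVf //; apply: lt0r_neq0; lra.
have hpos v : eps <= `|v| -> `|v| <= 1 -> 0 < NN (dec v).
  move=> h _; rewrite lt_neqAle NN_ge0 andbT; apply/eqP => /esym /NN_eq0 /dec_eq0 v0.
  by move: h; rewrite v0 normr0; lra.
have [c [c0 hc]] := lower_pos f_cont hpos.
exists c; split => // p t t0 ht.
set a := aE p.1; set b := bF p.2; set sb := Num.sqrt b; set s := a + sb.
move: ht; rewrite -/a -/b => ht.
have a0 : 0 <= a by exact: aE_ge0.
have b0 : 0 <= b by exact: bF_ge0.
have sb0 : 0 <= sb by exact: sqrtr_ge0.
have sb2 : sb ^+ 2 = b by rewrite sqr_sqrtr.
have st : t <= s.
  case: ht => ht; first by rewrite /s; lra.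
  have : t <= sb by rewrite -(ger0_norm (ltW t0)) -sqrtr_sqr /sb ler_sqrt.
  by rewrite /s; lra.
have s0 : 0 < s by lra.
pose q := dilN s^-1 p.
have pq : p = dilN s q by rewrite /q dil_comp divff ?gt_eqF // dil1.
have req i : `|re q.1 i| = s^-1 * `|re p.1 i|.
  by rewrite /q /dilN /= reR normrM gtr0_norm ?invr_gt0.
have imq i : `|im q.1 i| = s^-1 * `|im p.1 i|.
  by rewrite /q /dilN /= imR normrM gtr0_norm ?invr_gt0.
have xq j : `|q.2 0 j| = (s ^+ 2)^-1 * `|p.2 0 j|.
  by rewrite /q /dilN /= mxE normrM exprVn gtr0_norm // invr_gt0 exprn_gt0.
have hq : c <= NN q.
  rewrite -(dec_enc q); apply: hc.
    rewrite leNgt; apply/negP => H.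
    have A1 : s^-1 * a <= (eps + eps) *+ n.
      rewrite /a /aE mulr_sumr.
      apply: (@le_trans _ _ (\sum_(i < n) (eps + eps))); last by rewrite sumr_const card_ord.
      apply: ler_sum => i _; rewrite mulrDr -req -imq.
      apply: lerD; apply: ltW; apply: le_lt_trans H.
        by rewrite -enc_ll; apply: coord_le_norm.
      by rewrite -enc_lr; apply: coord_le_norm.
    have B1 : (s ^+ 2)^-1 * b <= eps *+ m.
      rewrite /b /bF mulr_sumr.
      apply: (@le_trans _ _ (\sum_(j < m) eps)); last by rewrite sumr_const card_ord.
      apply: ler_sum => j _; rewrite -xq; apply: ltW; apply: le_lt_trans H.
      by rewrite -enc_r; apply: coord_le_norm.
    rewrite -mulr_natr ler_pdivrMl // in A1.
    rewrite -mulr_natr ler_pdivrMl ?exprn_gt0 // in B1.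
    have h1 : eps * nN <= eps * N by rewrite ler_wpM2l ?ltW // /N; lra.
    have h2 : eps * mN <= eps * N by rewrite ler_wpM2l ?ltW // /N; lra.
    have e2 : (eps + eps) * nN <= 1 / 4%:R by lra.
    have e3 : eps * mN <= 1 / 8%:R by lra.
    have A2 : a <= s / 4%:R by nra.
    have B2 : b <= s ^+ 2 / 8%:R by nra.
    rewrite -sb2 in B2; rewrite /s in A2 B2; nra.
  apply: norm_le_coord => //; apply: split3 => i.
  - rewrite enc_ll req ler_pdivrMl // mulr1; apply: le_trans (re_le_aE _ i) _.
    by rewrite -/a /s; lra.
  - rewrite enc_lr imq ler_pdivrMl // mulr1; apply: le_trans (im_le_aE _ i) _.
    by rewrite -/a /s; lra.
  - rewrite enc_r xq ler_pdivrMl ?exprn_gt0 // mulr1; apply: le_trans (term_bF _ i) _.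
    rewrite -/b -sb2 /s; nra.
rewrite pq NN_dil //; nra.
Qed.

Lemma LB : exists c, 0 < c /\ forall p t, 0 < t -> NN p < c * t ->
  (forall i, `|re p.1 i| < t /\ `|im p.1 i| < t) /\ (forall j, `|p.2 0 j| < t ^+ 2).
Proof.
have [c [c0 hc]] := LBcore; exists c; split => // p t t0 hN; split.
  move=> i; split; rewrite ltNge; apply/negP => h.
    by have := hc p t t0 (or_introl (le_trans h (re_le_aE _ i))); lra.
  by have := hc p t t0 (or_introl (le_trans h (im_le_aE _ i))); lra.
move=> j; rewrite ltNge; apply/negP => h.
by have := hc p t t0 (or_intror (le_trans h (term_bF _ j))); lra.
Qed.

Lemma distE_sum (z w : Espace R n) :
  distE z w ^+ 2 = \sum_i (re (z - w) i ^+ 2 + im (z - w) i ^+ 2).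
Proof.
rewrite /distE sqr_sqrtr //; apply: sumr_ge0 => i _.
by rewrite addr_ge0 // sqr_ge0.
Qed.
Lemma distF_sum (x y : Fspace R m) :
  distF x y ^+ 2 = \sum_j ((x - y) 0 j) ^+ 2.
Proof.
rewrite /distF sqr_sqrtr //; apply: sumr_ge0 => i _; exact: sqr_ge0.
Qed.

Lemma re_le_distE (z w : Espace R n) i : `|re (z - w) i| <= distE z w.
Proof.
rewrite -sqrtr_sqr /distE ler_sqrt; last first.
  by apply: sumr_ge0 => l _; rewrite addr_ge0 // sqr_ge0.
rewrite (bigD1 i) //= -addrA lerDl addr_ge0 ?sqr_ge0 //.
by apply: sumr_ge0 => l _; rewrite addr_ge0 // sqr_ge0.
Qed.
Lemma im_le_distE (z w : Espace R n) i : `|im (z - w) i| <= distE z w.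
Proof.
rewrite -sqrtr_sqr /distE ler_sqrt; last first.
  by apply: sumr_ge0 => l _; rewrite addr_ge0 // sqr_ge0.
rewrite (bigD1 i) //= [X in _ <= X + _]addrC -addrA lerDl addr_ge0 ?sqr_ge0 //.
by apply: sumr_ge0 => l _; rewrite addr_ge0 // sqr_ge0.
Qed.
Lemma coord_le_distF (x y : Fspace R m) j : `|(x - y) 0 j| <= distF x y.
Proof.
rewrite -sqrtr_sqr /distF ler_sqrt; last by apply: sumr_ge0 => l _; rewrite sqr_ge0.
by rewrite (bigD1 j) //= lerDl sumr_ge0 // => l _; rewrite sqr_ge0.
Qed.

Lemma sq_le (x t : R) : `|x| <= t -> x ^+ 2 <= t ^+ 2.
Proof.
move=> h; have e := real_normK (num_real x); have := normr_ge0 x; nra.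
Qed.

Lemma distE_small (z w : Espace R n) t : 0 <= t ->
  (forall i, `|re (z - w) i| <= t /\ `|im (z - w) i| <= t) ->
  distE z w ^+ 2 <= (t ^+ 2 + t ^+ 2) * n%:R.
Proof.
move=> t0 h; rewrite distE_sum.
apply: (@le_trans _ _ (\sum_(i < n) (t ^+ 2 + t ^+ 2))); last by rewrite sumr_const card_ord mulr_natr.
apply: ler_sum => i _; have [h1 h2] := h i.
by apply: lerD; apply: sq_le.
Qed.

Lemma distF_small (x y : Fspace R m) t : 0 <= t ->
  (forall j, `|(x - y) 0 j| <= t) -> distF x y ^+ 2 <= t ^+ 2 * m%:R.
Proof.
move=> t0 h; rewrite distF_sum.
apply: (@le_trans _ _ (\sum_(j < m) t ^+ 2)); last by rewrite sumr_const card_ord mulr_natr.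
by apply: ler_sum => j _; apply: sq_le.
Qed.

Lemma distE_xx (z : Espace R n) : distE z z = 0.
Proof.
rewrite /distE subrr big1 ?sqrtr0 // => i _.
by rewrite !mxE Re0 Im0 expr0n /= addr0.
Qed.
Lemma distF_xx (x : Fspace R m) : distF x x = 0.
Proof. by rewrite /distF subrr big1 ?sqrtr0 // => i _; rewrite !mxE expr0n. Qed.

Lemma main_sec : exists C C' : R, 0 < C /\ 0 < C' /\
    forall (delta Rc : R), 0 < delta -> 1 < Rc ->
    forall (J J' : Type) (x : J -> Fspace R m) (zeta : J' -> Espace R n),
      is_lattice (@distF R m) x (delta ^+ 2) (Rc ^+ 2) ->
      is_lattice (@distE R n) zeta delta Rc ->
      is_lattice d (fun jj : J * J' => (zeta jj.2, x jj.1) : Ngroup R n m)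
        (C * delta) (C' * Rc).
Proof.
have [c [c0 hLB]] := LB; have [KU [KU0 hU]] := Ubound.
pose nN : R := n%:R; pose mN : R := m%:R.
have nN0 : 0 <= nN by rewrite ler0n.
have mN0 : 0 <= mN by rewrite ler0n.
pose Nn := nN + nN + mN + 1.
have Nn1 : 1 <= Nn by rewrite /Nn; lra.
pose C := c / (2%:R * Nn).
have C0 : 0 < C by rewrite /C divr_gt0 //; lra.
pose C' := (KU + 1) / C.
have C'0 : 0 < C' by rewrite /C' divr_gt0 //; lra.
have CC : C' * C = KU + 1 by rewrite /C' divfK // gt_eqF.
exists C, C'; split => //; split => //.
move=> delta Rc d0 Rc1 J J' x zeta [xdis xcov] [zdis zcov]; split.
  move=> [a a'] [b b'] hne y [h1 h2].
  rewrite /ball_of /= in h1 h2.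
  pose t := delta / Nn.
  have t0 : 0 < t by rewrite /t divr_gt0 //; lra.
  have tN : t * Nn = delta by rewrite /t divfK // gt_eqF //; lra.
  have hPQ : NN (mulN Phi (invN (zeta a', x a)) (zeta b', x b)) < c * t.
    rewrite -d_NN; apply: le_lt_trans (d_tri _ y _) _; rewrite (d_sym y).
    have -> : c * t = 2%:R * C * delta.
      by rewrite /C /t; field; apply: lt0r_neq0; lra.
    lra.
  have [hz hx] := hLB _ _ t0 hPQ; rewrite mulinv /= in hz hx.
  case: (pselect (a' = b')) => [eab|nab].
    subst b'; have nab : a <> b by move=> e; apply: hne; rewrite e.
    rewrite Psi_diag scaler0 subr0 in hx.
    have hb : delta ^+ 2 <= distF (x b) (x a).
      rewrite leNgt; apply/negP => hb; apply: (xdis a b nab (x a)); split => //.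
      by rewrite /ball_of distF_xx exprn_gt0.
    have hs := distF_small (ltW (exprn_gt0 2 t0)) (fun j => ltW (hx j)).
    set D := distF (x b) (x a) in hb hs.
    set u := t ^+ 2 in hs.
    have u0 : 0 < u by rewrite /u exprn_gt0.
    have e1 : delta ^+ 2 = u * (Nn * Nn) by rewrite /u -tN; ring.
    have e2 : u * (mN + 1) <= delta ^+ 2 by rewrite e1 ler_pM2l //; rewrite /Nn; nra.
    have e3 : u * (mN + 1) <= D by lra.
    have : (u * (mN + 1)) ^+ 2 <= D ^+ 2 by apply: sq_le; rewrite ger0_norm //; nra.
    nra.
  have hb : delta <= distE (zeta b') (zeta a').
    rewrite leNgt; apply/negP => hb; apply: (zdis a' b' nab (zeta a')); split => //.
    by rewrite /ball_of distE_xx.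
  have hs := distE_small (ltW t0) (fun i => let: conj p q := hz i in conj (ltW p) (ltW q)).
  set D := distE (zeta b') (zeta a') in hb hs.
  have : delta ^+ 2 <= D ^+ 2 by apply: sq_le; rewrite ger0_norm //; lra.
  have e1 : delta ^+ 2 = t ^+ 2 * (Nn * Nn) by rewrite -tN; ring.
  have e2 : t ^+ 2 * (nN + nN + 1) <= t ^+ 2 * (Nn * Nn).
    by rewrite ler_pM2l ?exprn_gt0 //; rewrite /Nn; nra.
  have : 0 < t ^+ 2 by rewrite exprn_gt0.
  nra.
move=> [z y]; have [j' hj'] := zcov z.
pose y' := y - 2%:R *: Psi (zeta j') z.
have [j hj] := xcov y'.
exists (j, j'); rewrite /ball_of /= in hj hj' *; rewrite d_NN mulinv /=.
pose r := Rc * delta.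
have r0 : 0 < r by rewrite /r mulr_gt0 //; lra.
apply: (le_lt_trans (hU r _ _ r0 _ _)).
- move=> i; have := re_le_distE (zeta j') z i; have := im_le_distE (zeta j') z i.
  rewrite !re_sub !im_sub => hi hr; split; rewrite distrC; rewrite -/r in hj'; lra.
- move=> k; have := coord_le_distF (x j) y' k.
  have -> : (y - x j - 2%:R *: Psi (zeta j') z) 0 k = - ((x j - y') 0 k).
    by rewrite /y' !mxE; lra.
  rewrite normrN => hk; rewrite /r exprMn; lra.
have -> : C' * Rc * (C * delta) = (KU + 1) * r by rewrite /r -CC; ring.
nra.
Qed.

End Grp.

Theorem lemma6p1 (R : realType) (n m : nat)
  (Phi : Espace R n -> Espace R n -> FCspace R m)
  (d : Ngroup R n m -> Ngroup R n m -> R) :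
  hermitian_map Phi ->
  is_distance d -> left_invariant Phi d -> homogeneous1 d ->
  exists C C' : R, 0 < C /\ 0 < C' /\
    forall (delta Rc : R), 0 < delta -> 1 < Rc ->
    forall (J J' : Type) (x : J -> Fspace R m) (zeta : J' -> Espace R n),
      is_lattice (@distF R m) x (delta ^+ 2) (Rc ^+ 2) ->
      is_lattice (@distE R n) zeta delta Rc ->
      is_lattice d (fun jj : J * J' => (zeta jj.2, x jj.1) : Ngroup R n m)
        (C * delta) (C' * Rc).
Proof. by move=> hPhi hd hli hh; apply: (main_sec hPhi hd hli hh). Qed.
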